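(* Let $G,H,L\colon\mathbb{R}^n\to\mathbb{R}^n$ be positive semidefinite linear maps and let $k\in\{1,\dots,n\}$. Assume that $$\left\langle\left(\wedge^k G+\wedge^k H\right)\xi,\xi\right\rangle=\left\langle\left(\wedge^k L\right)\xi,\xi\right\rangle$$ for all decomposable $\xi\in\bigwedge^k\mathbb{R}^n$. Then $\wedge^k G+\wedge^k H=\wedge^k L$.
   Context: $\bigwedge^k\mathbb{R}^n$ is the $k$-th exterior power with the inner product determined by $\langle u_1\wedge\dots\wedge u_k, v_1\wedge\dots\wedge v_k\rangle=\det(\langle u_i,v_j\rangle)_{i,j=1}^k$. For a linear map $A$, $\wedge^k A$ is the induced linear map on $\bigwedge^k\mathbb{R}^n$ with $(\wedge^kA)(v_1\wedge\dots\wedge v_k)=Av_1\wedge\dots\wedge Av_k$. A $k$-vector is decomposable if it is of the form $v_1\wedge\dots\wedge v_k$. *)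

(* Defs.v *)
(* Exterior powers of R^n modelled concretely in the
   orthonormal basis e_I (I a k-subset of {0..n-1}, listed increasingly). *)
From HB Require Import structures.
From mathcomp Require Import all_boot all_order all_algebra.
From mathcomp Require Import reals.
Set Implicit Arguments. Unset Strict Implicit. Unset Printing Implicit Defensive.
Import Order.TTheory GRing.Theory Num.Theory.
Local Open Scope ring_scope.

Definition ksub (n k : nat) := {I : {set 'I_n} | #|I| == k}.

(* the increasing enumeration i_0 < ... < i_{k-1} of I *)
Definition kidx (n k : nat) (I : ksub n k) (i : 'I_k) : 'I_n :=
  enum_val (cast_ord (esym (eqP (valP I))) i).

Section Ext.
Variable R : realType.
Variables n k : nat.

(* /\^k R^n, coordinates w.r.t. the basis e_I = e_{i_0} /\ ... /\ e_{i_{k-1}} *)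
Definition extpow := {ffun ksub n k -> R}.

(* the inner product determined by <u_1/\../\u_k, v_1/\../\v_k> = det(<u_i,v_j>);
   it makes the basis e_I orthonormal *)
Definition ext_dot (xi eta : extpow) : R := \sum_(I : ksub n k) xi I * eta I.

(* v_0 /\ ... /\ v_{k-1}: its e_I-coordinate is the k x k minor on rows I *)
Definition wedge_vecs (v : 'I_k -> 'cV[R]_n) : extpow :=
  [ffun I => \det (\matrix_(i < k, j < k) v j (kidx I i) ord0)].

Definition decomposable (xi : extpow) : Prop :=
  exists v : 'I_k -> 'cV[R]_n, xi = wedge_vecs v.

(* /\^k A (for the linear map x |-> A *m x): (/\^k A) e_J = sum_I det A[I,J] e_I,
   so that (/\^k A)(v_1/\../\v_k) = A v_1 /\ ../\ A v_k (Cauchy--Binet). *)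
Definition wedge_pow (A : 'M[R]_n) (xi : extpow) : extpow :=
  [ffun I => \sum_(J : ksub n k)
              \det (\matrix_(i < k, j < k) A (kidx I i) (kidx J j)) * xi J].

End Ext.

Definition psd (R : realType) (n : nat) (A : 'M[R]_n) : Prop :=
  A^T = A /\ forall x : 'cV[R]_n, 0 <= (x^T *m A *m x) ord0 ord0.

(* Main.v *)
Require Import Defs.
From HB Require Import structures.
From mathcomp Require Import all_boot all_order all_algebra.
From mathcomp Require Import reals.
From mathcomp Require Import ring.
From mathcomp Require Import fingroup perm.
Import Order.TTheory GRing.Theory Num.Theory.
Local Open Scope ring_scope.

Section S.
Variable R : realType.
Variables n k : nat.
Local Notation T := (('I_n * 'I_n) * bool)%type.
Definition sg (b : bool) : R := if b then 1 else -1.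
Definition Bf (i : 'I_n) (m : T) : R := (i == m.1.1)%:R + sg m.2 * (i == m.1.2)%:R.
Definition wA (A : 'M[R]_n) (m : T) : R := sg m.2 * A m.1.1 m.1.2 / 4%:R.

Lemma sum_delta (F : 'I_n -> R) j : \sum_q F q * (j == q)%:R = F j.
Proof.
rewrite (bigD1 j) //= eqxx mulr1 big1 ?addr0 // => q /negbTE.
by rewrite eq_sym => ->; rewrite mulr0.
Qed.

Lemma decomp (A : 'M[R]_n) : A^T = A ->
  forall i j, A i j = \sum_(m : T) wA A m * Bf i m * Bf j m.
Proof.
move=> hA i j.
have hs : A j i = A i j by rewrite -{1}hA mxE.
have -> : \sum_(m : T) wA A m * Bf i m * Bf j m =
   \sum_(pq : 'I_n * 'I_n) \sum_(s : bool) wA A (pq, s) * Bf i (pq, s) * Bf j (pq, s).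
  by rewrite pair_bigA.
have -> : \sum_(pq : 'I_n * 'I_n) \sum_(s : bool) wA A (pq, s) * Bf i (pq, s) * Bf j (pq, s)
  = \sum_(pq : 'I_n * 'I_n) (A pq.1 pq.2 / 2%:R * ((i == pq.1)%:R * (j == pq.2)%:R)
     + A pq.1 pq.2 / 2%:R * ((i == pq.2)%:R * (j == pq.1)%:R)).
  apply: eq_bigr => pq _; rewrite big_bool /wA /Bf /sg /=.
  by field.
rewrite -(pair_bigA _ (fun p q => A p q / 2%:R * ((i == p)%:R * (j == q)%:R)
     + A p q / 2%:R * ((i == q)%:R * (j == p)%:R))) /=.
have e1 : forall p, \sum_q (A p q / 2%:R * ((i == p)%:R * (j == q)%:R)
     + A p q / 2%:R * ((i == q)%:R * (j == p)%:R))
     = (A p j / 2%:R) * (i == p)%:R + (A p i / 2%:R) * (j == p)%:R.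
  move=> p; rewrite big_split /=; congr (_ + _).
    rewrite -(sum_delta (fun q => A p q / 2%:R * (i == p)%:R)).
    by apply: eq_bigr => q _; ring.
  rewrite -(sum_delta (fun q => A p q / 2%:R * (j == p)%:R)).
  by apply: eq_bigr => q _; ring.

under eq_bigr => p _ do rewrite e1.
rewrite big_split /= !sum_delta hs.
by field.
Qed.

Local Notation sub A I J := (\matrix_(i < k, j < k) A (kidx I i) (kidx J j)).
Definition vf (f : {ffun 'I_k -> T}) : 'I_k -> 'cV[R]_n := fun j => \col_i Bf i (f j).

Lemma wv_vf f (I : ksub n k) :
  wedge_vecs (vf f) I = \det (\matrix_(i < k, j < k) Bf (kidx I i) (f j)).
Proof. by rewrite ffunE; congr (\det _); apply/matrixP => i j; rewrite !mxE. Qed.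

Lemma det_expand (A : 'M[R]_n) : A^T = A -> forall I J : ksub n k,
  \det (sub A I J) = \sum_(f : {ffun 'I_k -> T})
     (\prod_a (wA A (f a) * Bf (kidx I a) (f a))) * wedge_vecs (vf f) J.
Proof.
move=> hA I J.
have -> : \det (sub A I J) = \sum_(s : 'S_k) (-1) ^+ s * \prod_a (sub A I J) a (s a) by [].
under eq_bigr => s _.
  under eq_bigr => a _ do rewrite mxE (decomp A hA).
  rewrite bigA_distr_bigA mulr_sumr.
  over.
rewrite exchange_big /=; apply: eq_bigr => f _.
rewrite wv_vf -det_tr.
have -> : \det (\matrix_(i < k, j < k) Bf (kidx J i) (f j))^T =
   \sum_(s : 'S_k) (-1) ^+ s * \prod_a (\matrix_(i < k, j < k) Bf (kidx J i) (f j))^T a (s a) by [].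
rewrite mulr_sumr; apply: eq_bigr => s _.
rewrite mulrCA; congr (_ * _).
rewrite -big_split /=; apply: eq_bigr => a _; rewrite !mxE; ring.
Qed.

Lemma wv_perm (f : {ffun 'I_k -> T}) (t : 'S_k) (I : ksub n k) :
  wedge_vecs (vf [ffun a => f (t a)]) I = (-1) ^+ t * wedge_vecs (vf f) I.
Proof.
rewrite !wv_vf.
have -> : (\matrix_(i < k, j < k) Bf (kidx I i) ([ffun a => f (t a)] j))
   = col_perm t (\matrix_(i < k, j < k) Bf (kidx I i) (f j)).
  by apply/matrixP => i j; rewrite !mxE ffunE.
by rewrite col_permE det_mulmx det_perm odd_permV mulrC.
Qed.

Definition Qf (A : 'M[R]_n) (f : {ffun 'I_k -> T}) (I : ksub n k) : R :=
  \prod_(a < k) (wA A (f a) * Bf (kidx I a) (f a)).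
Definition gf (N : ksub n k -> ksub n k -> R) (f : {ffun 'I_k -> T}) (I : ksub n k) : R :=
  \sum_(J : ksub n k) N I J * wedge_vecs (vf f) J.

Lemma Qf_perm A (f : {ffun 'I_k -> T}) (t : 'S_k) I :
  Qf A [ffun a => f (t a)] I = (\prod_(a < k) wA A (f a)) * \prod_(a < k) Bf (kidx I a) (f (t a)).
Proof.
rewrite /Qf big_split /=; congr (_ * _).
  rewrite (reindex_inj (@perm_inj _ t^-1)) /=.
  by apply: eq_bigr => a _; rewrite ffunE permKV.
by apply: eq_bigr => a _; rewrite ffunE.
Qed.

Lemma gf_perm N (f : {ffun 'I_k -> T}) (t : 'S_k) I :
  gf N [ffun a => f (t a)] I = (-1) ^+ t * gf N f I.
Proof.
rewrite /gf mulr_sumr; apply: eq_bigr => J _; rewrite wv_perm mulrCA //.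
Qed.

Lemma keylemma (N : ksub n k -> ksub n k -> R) :
  (forall v : 'I_k -> 'cV[R]_n,
     \sum_I (\sum_J N I J * wedge_vecs v J) * wedge_vecs v I = 0) ->
  forall A : 'M[R]_n, A^T = A ->
  \sum_I \sum_J N I J * \det (sub A I J) = 0.
Proof.
move=> HN A hA.
have -> : \sum_I \sum_J N I J * \det (sub A I J) = \sum_f \sum_I Qf A f I * gf N f I.
  rewrite [RHS]exchange_big /=; apply: eq_bigr => I _.
  under eq_bigr => J _ do rewrite (det_expand A hA) mulr_sumr.
  rewrite exchange_big /=; apply: eq_bigr => f _.
  rewrite /gf mulr_sumr; apply: eq_bigr => J _; rewrite /Qf mulrCA mulrA //.
match goal with |- ?L = 0 => set X := L end.
have hk : (k`!)%:R != 0 :> R by rewrite pnatr_eq0 -lt0n fact_gt0.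
apply/eqP; rewrite -(mulrI_eq0 _ (lregP hk)); apply/eqP.
have -> : k`!%:R * X = \sum_(t : 'S_k) X.
  by rewrite sumr_const card_Sn mulr_natl.
have step : forall t : 'S_k, X = \sum_(f : {ffun 'I_k -> T}) (\prod_(a < k) wA A (f a)) * \sum_I
    ((-1) ^+ t * \prod_(a < k) Bf (kidx I a) (f (t a))) * gf N f I.
  move=> t; rewrite /X.
  have hinj : injective (fun f : {ffun 'I_k -> T} => [ffun a => f (t a)]).
    move=> f1 f2 /ffunP e; apply/ffunP => x.
    by have := e (t^-1 x)%g; rewrite !ffunE permKV.
  rewrite (reindex_inj hinj) /=; apply: eq_bigr => f _.
  rewrite mulr_sumr; apply: eq_bigr => I _.
  rewrite Qf_perm gf_perm.
  have sq : (-1) ^+ t * (-1) ^+ t = 1 :> R.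
    by rewrite -signr_addb addbb expr0.
  rewrite -!mulrA; congr (_ * _).
  by rewrite mulrCA.
under eq_bigr => t _ do rewrite (step t).
rewrite exchange_big /=.
apply: big1 => f _.
rewrite -mulr_sumr.
have -> : \sum_(t : 'S_k) \sum_I ((-1) ^+ t * \prod_(a < k) Bf (kidx I a) (f (t a))) * gf N f I
  = \sum_I (\sum_J N I J * wedge_vecs (vf f) J) * wedge_vecs (vf f) I.
  rewrite exchange_big /=; apply: eq_bigr => I _.
  rewrite /gf mulrC -mulr_suml; congr (_ * _).
  rewrite wv_vf /determinant; apply: eq_bigr => s _; congr (_ * _).
  by apply: eq_bigr => a _; rewrite mxE.
by rewrite HN mulr0.
Qed.
End S.

Lemma addE (R : realType) n k (f g : extpow R n k) I : (f + g) I = f I + g I.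
Proof. by rewrite ffunE. Qed.

Theorem lemma3p1 (R : realType) (n k : nat) (G H L : 'M[R]_n) :
  psd G -> psd H -> psd L -> (1 <= k <= n)%N ->
  (forall xi : extpow R n k, decomposable xi ->
     ext_dot (wedge_pow G xi + wedge_pow H xi) xi
     = ext_dot (wedge_pow L xi) xi) ->
  forall xi : extpow R n k, wedge_pow G xi + wedge_pow H xi = wedge_pow L xi.
Proof.
move=> [hG _] [hH _] [hL _] _ Hyp xi.
pose sub (A : 'M[R]_n) (I J : ksub n k) :=
  \matrix_(i < k, j < k) A (kidx I i) (kidx J j).
pose N I J := \det (sub G I J) + \det (sub H I J) - \det (sub L I J).
have HN : forall v : 'I_k -> 'cV[R]_n,
    \sum_I (\sum_J N I J * wedge_vecs v J) * wedge_vecs v I = 0.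
  move=> v; have := Hyp (wedge_vecs v) (ex_intro _ v erefl).
  rewrite /ext_dot => /eqP; rewrite -subr_eq0 -sumrB => /eqP E; rewrite -[RHS]E.
  apply: eq_bigr => I _; rewrite addE !ffunE -mulrBl; congr (_ * _).
  rewrite -big_split -sumrB /=; apply: eq_bigr => J _; rewrite /N; ring.
have N0 : forall I J, N I J = 0.
  have S0 : \sum_I \sum_J N I J ^+ 2 = 0.
    transitivity (\sum_I \sum_J N I J * \det (sub G I J)
       + \sum_I \sum_J N I J * \det (sub H I J)
       - \sum_I \sum_J N I J * \det (sub L I J)).
      rewrite -big_split -sumrB /=; apply: eq_bigr => I _.
      rewrite -big_split -sumrB /=; apply: eq_bigr => J _.
      rewrite expr2 {2}/N; ring.
    by rewrite !(keylemma _ _ _ _ HN) // subr0 addr0.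
  move=> I J.
  have hI : \sum_J N I J ^+ 2 = 0.
    apply: (psumr_eq0P _ S0) => // I1 _; apply: sumr_ge0 => J1 _; exact: sqr_ge0.
  have hIJ : N I J ^+ 2 = 0.
    apply: (psumr_eq0P _ hI) => // J1 _; exact: sqr_ge0.
  by apply/eqP; rewrite -sqrf_eq0 hIJ.
apply/ffunP => I; rewrite addE !ffunE -big_split /=.
apply: eq_bigr => J _.
have := N0 I J; rewrite /N => /eqP; rewrite subr_eq0 => /eqP <-.
by rewrite mulrDl.
Qed.
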